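(* Let $\alpha(n)$ be a sequence of positive reals and fix a positive integer $d$. Suppose there exist real sequences $R(n)$, $\delta(n)$ and $C_r(n)$ ($r=0,\dots,d$) such that, as $n\to\infty$, $$\frac{\alpha(n+j)}{\alpha(n)R(n)^j}=C_0(n)+\sum_{r=1}^dC_r(n)\delta(n)^rj^r+o(\delta(n)^d)$$ for $j=1,\dots,d$. Suppose also that $\delta(n)>0$, $\delta(n)\to0$, and $C_r(n)\to c_r\in\mathbb R$ for each $r$. Then, as $n\to\infty$, coefficientwise, $$\frac{\delta(n)^{-d}}{\alpha(n)}J_\alpha^{d,n}\!\left(\frac{\delta(n)X-1}{R(n)}\right)\to d!\sum_{k=0}^d(-1)^{d-k}c_{d-k}\frac{X^k}{k!},$$ $$\frac{(R(n)\delta(n))^{-d}}{\alpha(n)}K_\alpha^{d,n}\!\bigl(R(n)(\delta(n)X-1)\bigr)\to d!\sum_{k=0}^dc_{d-k}\frac{X^k}{k!}.$$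
   Context: $J_\alpha^{d,n}(X)=\sum_{j=0}^d\binom dj\alpha(n+j)X^j$ and $K_\alpha^{d,n}(X)=X^dJ_\alpha^{d,n}(1/X)=\sum_{j=0}^d\binom dj\alpha(n+j)X^{d-j}$. *)

(* Defs.v *)
From HB Require Import structures.
From mathcomp Require Import all_boot all_order all_algebra.
From mathcomp Require Import all_classical all_reals all_analysis.
Set Implicit Arguments. Unset Strict Implicit. Unset Printing Implicit Defensive.
Import Order.TTheory GRing.Theory Num.Theory.
Local Open Scope ring_scope.

Definition Jpoly (R : realType) (alpha : nat -> R) (d n : nat) : {poly R} :=
  \sum_(j < d.+1) (('C(d, j))%:R * alpha (n + j)%N) *: 'X^j.

(* K_alpha^{d,n}(X) = X^d J(1/X) = \sum_{j=0}^d binom(d,j) alpha(n+j) X^(d-j) *)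
Definition Kpoly (R : realType) (alpha : nat -> R) (d n : nat) : {poly R} :=
  \sum_(j < d.+1) (('C(d, j))%:R * alpha (n + j)%N) *: 'X^(d - j).

Definition limJ (R : realType) (c : nat -> R) (d : nat) : {poly R} :=
  (d`!)%:R *: \sum_(k < d.+1) ((-1) ^+ (d - k) * c (d - k)%N / (k`!)%:R) *: 'X^k.

Definition limK (R : realType) (c : nat -> R) (d : nat) : {poly R} :=
  (d`!)%:R *: \sum_(k < d.+1) (c (d - k)%N / (k`!)%:R) *: 'X^k.

(* Main.v *)
Require Import Defs.
From HB Require Import structures.
From mathcomp Require Import all_boot all_order all_algebra.
From mathcomp Require Import all_classical all_reals all_analysis.
From mathcomp Require Import zify ring lra.
Import Order.TTheory GRing.Theory Num.Theory.
Import numFieldNormedType.Exports.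
Local Open Scope classical_set_scope.
Local Open Scope ring_scope.

Lemma coef_lin_pow (R : comNzRingType) (a : R) (m k : nat) :
  ((a *: 'X - 1) ^+ m)`_k = ('C(m, k))%:R * a ^+ k * (-1) ^+ (m - k).
Proof.
have -> : a *: 'X - 1 = (-1)%:P + a *: 'X :> {poly R} by rewrite polyCN polyC1 addrC.
rewrite exprDn.
have -> : \sum_(i < m.+1) ((-1)%:P ^+ (m - i) * (a *: 'X) ^+ i) *+ 'C(m, i)
   = \poly_(i < m.+1) (('C(m, i))%:R * a ^+ i * (-1) ^+ (m - i)) :> {poly R}.
  rewrite poly_def; apply: eq_bigr => i _.
  rewrite -rmorphXn exprZn -scalerAr mul_polyC scalerA -scaler_nat scalerA.
  by rewrite mulrA.
rewrite coef_poly; case: ltnP => // H.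
by rewrite bin_small // !mul0r.
Qed.

Definition Gs {R : comNzRingType} (m r : nat) (x : R) :=
  \sum_(i < m.+1) ('C(m, i))%:R * (-1) ^+ i * (i%:R + x) ^+ r.

Lemma Gs_rec (R : comNzRingType) m r (x : R) :
  Gs m.+1 r x = Gs m r x - Gs m r (x + 1).
Proof.
rewrite /Gs big_ord_recl /=.
under eq_bigr => i _ do rewrite /bump /= binS natrD !mulrDl.
rewrite big_split /= addrA.
congr (_ + _).
  rewrite big_ord_recr /= (bin_small (ltnSn m)) mul0r mul0r addr0 [in RHS]big_ord_recl /= !bin0 add0r.
  congr (_ + _); apply: eq_bigr => i _; by rewrite /bump /= add1n.
rewrite -sumrN; apply: eq_bigr => i _.
rewrite exprS !mulrA mulrN1 -!mulNr; congr (_ * _).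
congr (_ ^+ _); rewrite natrD; ring.
Qed.

Lemma Gs_shift (R : comNzRingType) m r (x : R) :
  Gs m r (x + 1) = \sum_(s < r.+1) ('C(r, s))%:R * Gs m (r - s) x.
Proof.
rewrite /Gs.
under eq_bigr => i _ do rewrite addrA exprDn mulr_sumr.
rewrite exchange_big /=; apply: eq_bigr => s _.
rewrite mulr_sumr; apply: eq_bigr => i _.
by rewrite expr1n mulr1 -mulr_natl; ring.
Qed.

Lemma Gs_val (R : comNzRingType) m : forall r (x : R), (r <= m)%N ->
  Gs m r x = if r == m then (-1) ^+ m * (m`!)%:R else 0.
Proof.
elim: m => [|m IH] r x Hr.
  have -> : r = 0%N by case: r Hr.
  by rewrite /Gs big_ord_recl big_ord0 /= !expr0 !mulr1 addr0.
have E : Gs m.+1 r x = - \sum_(s < r) ('C(r, s.+1))%:R * Gs m (r - s.+1) x.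
  rewrite Gs_rec Gs_shift big_ord_recl /= bin0 mul1r subn0 opprD addrA subrr add0r.
  by [].
rewrite E.
case: (ltngtP r m.+1) Hr => // [Hlt|->] _.
  rewrite big1 ?oppr0 //.
  move=> s _; rewrite IH; last by lia.
  case: eqP => [Hs|]; last by rewrite mulr0.
  by have := ltn_ord s; lia.
rewrite big_ord_recl /= subSS subn0 IH // eqxx big1.
  rewrite addr0 bin1 exprS factS natrM; rewrite -mulr_natl; ring.
move=> s _; rewrite IH; last by lia.
case: eqP => [Hs|]; last by rewrite mulr0.
by have := ltn_ord s; move: Hs; rewrite /bump leq0n add1n; lia.
Qed.

Lemma bin_prod d k i : (i + k <= d)%N ->
  ('C(d, i + k) * 'C(i + k, k) = 'C(d, k) * 'C(d - k, i))%N.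
Proof.
move=> H.
have pos : (0 < k`! * (i`! * (d - k - i)`!))%N by rewrite !muln_gt0 !fact_gt0.
apply/eqP; rewrite -(eqn_pmul2r pos); apply/eqP.
have h1 := bin_fact (leq_addl i k). rewrite addnK in h1.
have h2 := bin_fact H.
have h3 : (k <= d)%N by lia.
have h4 := bin_fact h3.
have h5 : (i <= d - k)%N by lia.
have h6 := bin_fact h5.
have e : (d - (i + k) = d - k - i)%N by lia.
rewrite e in h2.
transitivity (d`!).
  rewrite -h2 -h1. ring.
rewrite -h4 -h6. ring.
Qed.

Lemma cvg_exprn (R : realType) (f : nat -> R) (a : R) m :
  f @ \oo --> a -> (fun n => f n ^+ m) @ \oo --> a ^+ m.
Proof.
move=> Hf; elim: m => [|m IH].
  have -> : (fun n => f n ^+ 0) = (fun=> 1) by apply/funext => n; rewrite expr0.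
  by rewrite expr0; exact: cvg_cst.
have -> : (fun n => f n ^+ m.+1) = (f \* (fun n => f n ^+ m)).
  by apply/funext=> n; rewrite exprS.
by rewrite exprS; exact: cvgM.
Qed.

Lemma cvg_bigsum (R : realType) m (f : nat -> nat -> R) (l : nat -> R) :
  (forall i, (i < m)%N -> f i @ \oo --> l i) ->
  (fun n => \sum_(i < m) f i n) @ \oo --> \sum_(i < m) l i.
Proof.
elim: m => [|m IH] H.
  have -> : (fun n => \sum_(i < 0) f i n) = (fun=> 0) by apply/funext => n; rewrite big_ord0.
  by rewrite big_ord0; exact: cvg_cst.
have -> : (fun n => \sum_(i < m.+1) f i n) =
   ((fun n => \sum_(i < m) f i n) + f m).
  by apply/funext=> n; rewrite big_ord_recr.
rewrite big_ord_recr /=; apply: cvgD.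
  by apply: IH => i Hi; apply: H; apply: ltnW.
exact: H.
Qed.

Lemma gen_lim (R : realType) (d k : nat) (de : nat -> R) (Cs : nat -> nat -> R)
  (c : nat -> R) (a : nat -> nat -> R) (w : nat -> R) (L : R) :
  (k <= d)%N -> (forall n, 0 < de n) -> de @ \oo --> 0 ->
  (forall r, (r <= d)%N -> Cs r @ \oo --> c r) ->
  (forall j, (j <= d)%N -> (fun n => (a j n - \sum_(r < d.+1) Cs r n * de n ^+ r * j%:R ^+ r)
       / de n ^+ d) @ \oo --> 0) ->
  (forall r, (r + k < d)%N -> \sum_(j < d.+1) w j * j%:R ^+ r = 0) ->
  \sum_(j < d.+1) w j * j%:R ^+ (d - k) = L ->
  (fun n => \sum_(j < d.+1) w j * (de n ^+ k / de n ^+ d * a j n)) @ \oo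
    --> c (d - k)%N * L.
Proof.
move=> Hk Hpos Hde HC He HM HL.
pose e := fun j n => (a j n - \sum_(r < d.+1) Cs r n * de n ^+ r * j%:R ^+ r) / de n ^+ d.
pose M := fun r => \sum_(j < d.+1) w j * j%:R ^+ r.
have -> : (fun n => \sum_(j < d.+1) w j * (de n ^+ k / de n ^+ d * a j n)) =
  (fun n => \sum_(r < d.+1) Cs r n * (de n ^+ (r + k) / de n ^+ d * M r))
  + (fun n => \sum_(j < d.+1) w j * (de n ^+ k * e j n)).
  apply/funext => n /=.
  have hd : de n ^+ d != 0 by rewrite expf_neq0 // gt_eqF.
  have aj : forall j, a j n = \sum_(r < d.+1) Cs r n * de n ^+ r * j%:R ^+ r
                               + de n ^+ d * e j n.
    by move=> j; rewrite /e mulrC divfK // addrC subrK.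
  under eq_bigr do rewrite aj mulrDr mulrDr.
  rewrite big_split /=; congr (_ + _).
    under eq_bigr do rewrite !mulr_sumr.
    rewrite exchange_big /=; apply: eq_bigr => r _.
    rewrite /M !mulr_sumr; apply: eq_bigr => j _.
    rewrite exprD; ring.
  apply: eq_bigr => j _.
  by congr (_ * _); rewrite mulrA divfK.
have -> : c (d - k)%N * L = c (d - k)%N * L + 0 by rewrite addr0.
apply: cvgD.
  have -> : c (d - k)%N * L = \sum_(r < d.+1) (if (r : nat) == (d - k)%N then c r * L else 0).
    have hlt : (d - k < d.+1)%N by lia.
    rewrite (bigD1 (Ordinal hlt)) //= eqxx big1 ?addr0 //.
    by move=> i; rewrite -val_eqE /= => /negbTE ->.
  apply: (@cvg_bigsum _ _ (fun r n => Cs r n * (de n ^+ (r + k) / de n ^+ d * M r))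
     (fun r => if r == (d - k)%N then c r * L else 0)) => r Hr.
  case: (ltngtP (r + k) d) => Hrk.
  - have -> : (fun n => Cs r n * (de n ^+ (r + k) / de n ^+ d * M r)) = (fun=> 0).
      by apply/funext => n; rewrite /M HM // !mulr0.
    have -> : (r == (d - k)%N) = false by apply/negbTE; lia.
    exact: cvg_cst.
  - have -> : (fun n => Cs r n * (de n ^+ (r + k) / de n ^+ d * M r)) =
              (Cs r \* (fun n => de n ^+ (r + k - d) * M r)).
      apply/funext => n /=.
      have hd : de n ^+ d != 0 by rewrite expf_neq0 // gt_eqF.
      congr (_ * (_ * _)).
      have -> : (r + k = (r + k - d) + d)%N by lia.
      by rewrite exprD mulfK // addnK.
    have -> : (r == (d - k)%N) = false by apply/negbTE; lia.
    have -> : (0 : R) = c r * (0 ^+ (r + k - d) * M r).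
      rewrite expr0n; have -> : (r + k - d == 0)%N = false by lia.
      by rewrite mul0r mulr0.
    apply: cvgM; first by apply: HC; lia.
    apply: cvgMr_tmp; exact: cvg_exprn.
  - have -> : (fun n => Cs r n * (de n ^+ (r + k) / de n ^+ d * M r)) =
              (fun n => Cs r n * M r).
      apply/funext => n /=.
      have hd : de n ^+ d != 0 by rewrite expf_neq0 // gt_eqF.
      by rewrite Hrk divff // mul1r.
    have -> : r = (d - k)%N by lia.
    rewrite eqxx -HL.
    by apply: cvgMr_tmp; apply: HC; lia.
have Z : \sum_(j < d.+1) (w j * (0 ^+ k * 0)) = (0 : R) by rewrite big1 // => j _; rewrite !mulr0.
suff H : (fun n => \sum_(j < d.+1) w j * (de n ^+ k * e j n)) @ \oo --> \sum_(j < d.+1) (w j * (0 ^+ k * 0)).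
  by rewrite Z in H.
apply: (@cvg_bigsum _ _ (fun j n => w j * (de n ^+ k * e j n))
   (fun j => w j * (0 ^+ k * 0))) => j Hj.
apply: cvgMl_tmp; apply: cvgM; first exact: cvg_exprn.
exact: He.
Qed.

Lemma comp_sum (R : realType) m (F : 'I_m -> {poly R}) q :
  (\sum_(j < m) F j) \Po q = \sum_(j < m) (F j \Po q).
Proof.
by rewrite (big_morph (fun p => p \Po q) (fun p1 p2 => comp_polyD p1 p2 q) (comp_poly0 q)).
Qed.

Lemma coefJpoly (R : realType) (alpha : nat -> R) d n (s u de : R) k :
  ((s *: (Jpoly alpha d n \Po (u *: (de *: 'X - 1)))))`_k =
  s * \sum_(j < d.+1) ( 'C(d, j)%:R * alpha (n + j)%N) *
        (u ^+ j * ( 'C(j, k)%:R * de ^+ k * (-1) ^+ (j - k))).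
Proof.
rewrite coefZ /Jpoly comp_sum coef_sum; congr (_ * _); apply: eq_bigr => j _.
by rewrite comp_polyZ comp_Xn_poly coefZ exprZn coefZ coef_lin_pow.
Qed.

Lemma coefKpoly (R : realType) (alpha : nat -> R) d n (s u de : R) k :
  ((s *: (Kpoly alpha d n \Po (u *: (de *: 'X - 1)))))`_k =
  s * \sum_(j < d.+1) ( 'C(d, j)%:R * alpha (n + j)%N) *
        (u ^+ (d - j) * ( 'C(d - j, k)%:R * de ^+ k * (-1) ^+ (d - j - k))).
Proof.
rewrite coefZ /Kpoly comp_sum coef_sum; congr (_ * _); apply: eq_bigr => j _.
by rewrite comp_polyZ comp_Xn_poly coefZ exprZn coefZ coef_lin_pow.
Qed.

Lemma bin_prod2 d k j : (j + k <= d)%N ->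
  ( 'C(d, j) * 'C(d - j, k) = 'C(d, k) * 'C(d - k, j))%N.
Proof.
move=> H.
have pos : (0 < j`! * (k`! * (d - k - j)`!))%N by rewrite !muln_gt0 !fact_gt0.
apply/eqP; rewrite -(eqn_pmul2r pos); apply/eqP.
have h1 : (j <= d)%N by lia.
have h2 := bin_fact h1.
have h3 : (k <= d - j)%N by lia.
have h4 := bin_fact h3.
have h5 : (k <= d)%N by lia.
have h6 := bin_fact h5.
have h7 : (j <= d - k)%N by lia.
have h8 := bin_fact h7.
have e : (d - j - k = d - k - j)%N by lia.
rewrite e in h4.
transitivity (d`!).
  rewrite -h2 -h4. ring.
rewrite -h6 -h8. ring.
Qed.

Lemma MJ (R : realType) d k r : (k <= d)%N ->
  \sum_(j < d.+1) ( 'C(d, j)%:R * 'C(j, k)%:R * (-1) ^+ (j - k)) * (j%:R : R) ^+ r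
  = 'C(d, k)%:R * Gs (d - k) r (k%:R).
Proof.
move=> Hk.
rewrite -(big_mkord xpredT (fun j => ( 'C(d, j)%:R * 'C(j, k)%:R * (-1) ^+ (j - k)) * (j%:R : R) ^+ r)).
have Hk1 : (k <= d.+1)%N by lia.
rewrite (@big_cat_nat _ _ _ k 0%N d.+1) /=; [|lia|lia].
rewrite big_nat big1 ?add0r; last first.
  by move=> j /andP[_ Hj]; rewrite (bin_small Hj) mulr0 !mul0r.
rewrite -{1}(add0n k) big_addn subSn // big_mkord /Gs mulr_sumr.
apply: eq_bigr => i _.
have Hi : (i + k <= d)%N by have := ltn_ord i; lia.
rewrite addnK -natrM bin_prod // natrM natrD; ring.
Qed.

Lemma MK (R : realType) d k r : (k <= d)%N ->
  \sum_(j < d.+1) ( 'C(d, j)%:R * 'C(d - j, k)%:R * (-1) ^+ (d - j - k)) * (j%:R : R) ^+ r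
  = 'C(d, k)%:R * (-1) ^+ (d - k) * Gs (d - k) r 0.
Proof.
move=> Hk.
rewrite -(big_mkord xpredT (fun j => ( 'C(d, j)%:R * 'C(d - j, k)%:R * (-1) ^+ (d - j - k)) * (j%:R : R) ^+ r)).
have H1 : ((d - k).+1 <= d.+1)%N by lia.
rewrite (@big_cat_nat _ _ _ (d - k).+1 0%N d.+1) /=; [|lia|lia].
rewrite [X in _ + X]big_nat [X in _ + X]big1 ?addr0; last first.
  move=> j /andP[Hj1 Hj2]; have Hs : (d - j < k)%N by lia.
  by rewrite (bin_small Hs) mulr0 !mul0r.
rewrite big_mkord /Gs mulr_sumr.
apply: eq_bigr => i _.
have Hi : (i + k <= d)%N by have := ltn_ord i; lia.
rewrite -natrM bin_prod2 // natrM addr0.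
have sg : forall i', (i' <= d - k)%N -> ((-1) ^+ (d - i' - k) : R) = (-1) ^+ (d - k) * (-1) ^+ i'.
  move=> i' Hi'; have -> : (d - k = (d - i' - k) + i')%N by lia.
  by rewrite exprD -mulrA -exprMn mulrNN mulr1 expr1n mulr1.
rewrite sg; last by have := ltn_ord i; lia.
ring.
Qed.

Lemma coef_limJ (R : realType) (c : nat -> R) d k :
  (limJ c d)`_k = if (k < d.+1)%N then (d`!)%:R * ((-1) ^+ (d - k) * c (d - k)%N / (k`!)%:R) else 0.
Proof.
rewrite /limJ coefZ -(poly_def _ (fun k => (-1) ^+ (d - k) * c (d - k)%N / (k`!)%:R)) coef_poly.
by case: ifP => //; rewrite mulr0.
Qed.

Lemma coef_limK (R : realType) (c : nat -> R) d k :
  (limK c d)`_k = if (k < d.+1)%N then (d`!)%:R * (c (d - k)%N / (k`!)%:R) else 0.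
Proof.
rewrite /limK coefZ -(poly_def _ (fun k => c (d - k)%N / (k`!)%:R)) coef_poly.
by case: ifP => //; rewrite mulr0.
Qed.

Lemma sgn2 (R : realType) m : ((-1) ^+ m * (-1) ^+ m : R) = 1.
Proof. by rewrite -exprMn mulrNN mulr1 expr1n. Qed.

Theorem theorem4p1 (R : realType) (alpha : nat -> R) (d : nat)
    (Rs delta : nat -> R) (C : nat -> nat -> R) (c : nat -> R) :
  (forall n, 0 < alpha n) ->
  (0 < d)%N ->
  (forall n, Rs n != 0) ->
  (forall n, 0 < delta n) ->
  delta @ \oo --> 0 ->
  (forall r, (r <= d)%N -> C r @ \oo --> c r) ->
  (* expansion with an o(delta(n)^d) error, for j = 0, ..., d *)
  (forall j, (j <= d)%N ->
     (fun n => (alpha (n + j)%N / (alpha n * Rs n ^+ j)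
                - (C 0%N n + \sum_(1 <= r < d.+1) C r n * delta n ^+ r * (j%:R) ^+ r))
               / delta n ^+ d) @ \oo --> 0) ->
  (forall k, (fun n => ((delta n ^- d / alpha n) *:
        (Jpoly alpha d n \Po ((Rs n)^-1 *: (delta n *: 'X - 1))))`_k)
      @ \oo --> (limJ c d)`_k) /\
  (forall k, (fun n => (((Rs n * delta n) ^- d / alpha n) *:
        (Kpoly alpha d n \Po (Rs n *: (delta n *: 'X - 1))))`_k)
      @ \oo --> (limK c d)`_k).
Proof.
move=> Hal Hd HR Hde Hde0 HC Hexp.
have He : forall j, (j <= d)%N ->
  (fun n => (alpha (n + j)%N / (alpha n * Rs n ^+ j)
     - \sum_(r < d.+1) C r n * delta n ^+ r * j%:R ^+ r) / delta n ^+ d) @ \oo --> 0.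
  move=> j Hj.
  have -> : (fun n => (alpha (n + j)%N / (alpha n * Rs n ^+ j)
     - \sum_(r < d.+1) C r n * delta n ^+ r * j%:R ^+ r) / delta n ^+ d) =
    (fun n => (alpha (n + j)%N / (alpha n * Rs n ^+ j)
                - (C 0%N n + \sum_(1 <= r < d.+1) C r n * delta n ^+ r * (j%:R) ^+ r))
               / delta n ^+ d).
    apply/funext => n; congr ((_ - _) / _).
    by rewrite -(big_mkord xpredT (fun r => C r n * delta n ^+ r * j%:R ^+ r)) big_ltn // !expr0 !mulr1.
  exact: Hexp.
split => k.
- have -> : (fun n => ((delta n ^- d / alpha n) *:
        (Jpoly alpha d n \Po ((Rs n)^-1 *: (delta n *: 'X - 1))))`_k) =
     (fun n => \sum_(j < d.+1) ( 'C(d, j)%:R * 'C(j, k)%:R * (-1) ^+ (j - k)) *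
        (delta n ^+ k / delta n ^+ d * (alpha (n + j)%N / (alpha n * Rs n ^+ j)))).
    apply/funext => n; rewrite coefJpoly mulr_sumr; apply: eq_bigr => j _.
    have ha : alpha n != 0 by rewrite gt_eqF.
    have hR := HR n.
    have hde : delta n != 0 by rewrite gt_eqF.
    rewrite exprVn; field.
    by rewrite ?expf_neq0 ?mulf_neq0 ?ha ?hR ?hde.
  case: (leqP k d) => Hk.
  + rewrite coef_limJ ltnS Hk.
    have -> : d`!%:R * ((-1) ^+ (d - k) * c (d - k)%N / k`!%:R) =
       c (d - k)%N * ( 'C(d, k)%:R * ((-1) ^+ (d - k) * (d - k)`!%:R)) :> R.
      have hf := bin_fact Hk.
      have hk : (k`!)%:R != 0 :> R by rewrite pnatr_eq0 -lt0n fact_gt0.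
      rewrite -hf !natrM; field.
      exact: hk.
    apply: (@gen_lim R d k delta C c (fun j n => alpha (n + j)%N / (alpha n * Rs n ^+ j))
              (fun j => 'C(d, j)%:R * 'C(j, k)%:R * (-1) ^+ (j - k)) _ Hk Hde Hde0 HC He).
      move=> r Hr; rewrite MJ // Gs_val; last by lia.
      have -> : (r == (d - k)%N) = false by apply/negbTE; lia.
      by rewrite mulr0.
    by rewrite MJ // Gs_val // eqxx.
  + rewrite coef_limJ ltnS leqNgt Hk /=.
    have -> : (fun n => \sum_(j < d.+1) ( 'C(d, j)%:R * 'C(j, k)%:R * (-1) ^+ (j - k)) *
        (delta n ^+ k / delta n ^+ d * (alpha (n + j)%N / (alpha n * Rs n ^+ j)))) = (fun=> 0).
      apply/funext => n; rewrite big1 // => j _.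
      have Hj : (j < k)%N by have := ltn_ord j; lia.
      by rewrite (bin_small Hj) mulr0 !mul0r.
    exact: cvg_cst.
- have -> : (fun n => (((Rs n * delta n) ^- d / alpha n) *:
        (Kpoly alpha d n \Po (Rs n *: (delta n *: 'X - 1))))`_k) =
     (fun n => \sum_(j < d.+1) ( 'C(d, j)%:R * 'C(d - j, k)%:R * (-1) ^+ (d - j - k)) *
        (delta n ^+ k / delta n ^+ d * (alpha (n + j)%N / (alpha n * Rs n ^+ j)))).
    apply/funext => n; rewrite coefKpoly mulr_sumr; apply: eq_bigr => j _.
    have ha : alpha n != 0 by rewrite gt_eqF.
    have hR := HR n.
    have hde : delta n != 0 by rewrite gt_eqF.
    have hj : (j <= d)%N by have := ltn_ord j; lia.
    have -> : Rs n * delta n = delta n * Rs n by rewrite mulrC.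
    rewrite exprMn.
    have -> : Rs n ^+ d = Rs n ^+ j * Rs n ^+ (d - j) by rewrite -exprD subnKC.
    field.
    by rewrite ?expf_neq0 ?mulf_neq0 ?ha ?hR ?hde.
  case: (leqP k d) => Hk.
  + rewrite coef_limK ltnS Hk.
    have -> : d`!%:R * (c (d - k)%N / k`!%:R) =
       c (d - k)%N * ( 'C(d, k)%:R * (d - k)`!%:R) :> R.
      have hf := bin_fact Hk.
      have hk : (k`!)%:R != 0 :> R by rewrite pnatr_eq0 -lt0n fact_gt0.
      rewrite -hf !natrM; field.
      exact: hk.
    apply: (@gen_lim R d k delta C c (fun j n => alpha (n + j)%N / (alpha n * Rs n ^+ j))
              (fun j => 'C(d, j)%:R * 'C(d - j, k)%:R * (-1) ^+ (d - j - k)) _ Hk Hde Hde0 HC He).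
      move=> r Hr; rewrite MK // Gs_val; last by lia.
      have -> : (r == (d - k)%N) = false by apply/negbTE; lia.
      by rewrite mulr0.
    rewrite MK // Gs_val // eqxx -!mulrA; congr (_ * _).
    by rewrite mulrA sgn2 mul1r.
  + rewrite coef_limK ltnS leqNgt Hk /=.
    have -> : (fun n => \sum_(j < d.+1) ( 'C(d, j)%:R * 'C(d - j, k)%:R * (-1) ^+ (d - j - k)) *
        (delta n ^+ k / delta n ^+ d * (alpha (n + j)%N / (alpha n * Rs n ^+ j)))) = (fun=> 0).
      apply/funext => n; rewrite big1 // => j _.
      have Hj : (d - j < k)%N by have := ltn_ord j; lia.
      by rewrite (bin_small Hj) mulr0 !mul0r.
    exact: cvg_cst.
Qed.
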